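(* Let $k\ge2$ and let $G,H$ be graphs. Let $u,v$ be vertices belonging to the same $2$-connected component of $G$, and let $u',v'$ be vertices of $H$ that are not contained in a common $2$-connected component of $H$. Then $\chi^k_G(u,v)\ne\chi^k_H(u',v')$.
   Context: Graphs are finite, simple, undirected (possibly vertex- or arc-colored; uncolored graphs are monochromatic). A graph is $2$-connected if it has more than $2$ vertices and removing any single vertex leaves it connected. A $2$-connected component of $G$ is an inclusion-maximal set $S'\subseteq V(G)$ such that $G[S']$ is $2$-connected. For $k\ge2$, the $k$-dimensional Weisfeiler–Leman algorithm computes a coloring of $V(G)^k$: the initial color of a tuple consists of its input color and the isomorphism type of the ordered induced subgraph on its entries; in each round the new color of $\bar v$ is the pair of its old color and the multiset, over $w\in V(G)$, of the $k$-tuples whose $i$-th component is the old color of $\bar v$ with its $i$-th entry replaced by $w$; the stable coloring is $\chi^k_G$, with canonical colors comparable across graphs. For $\ell<k$, $\chi^k_G(u_1,\dots,u_\ell):=\chi^k_G(u_1,\dots,u_\ell,u_\ell,\dots,u_\ell)$ (last entry repeated $k-\ell$ times). *)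

(* Defs.v *)
From mathcomp Require Import all_boot.
Set Implicit Arguments. Unset Strict Implicit. Unset Printing Implicit Defensive.

(* Uncolored graphs are those with constant colorings. Arc colors are only
   meaningful on arcs (ordered pairs of adjacent vertices). *)
Record cgraph := CGraph {
  vert :> finType;
  adj : rel vert;
  adj_sym : symmetric adj;
  adj_irr : irreflexive adj;
  vcol : vert -> nat;
  acol : vert -> vert -> nat
}.

Definition induced_rel (G : cgraph) (S : {set G}) : rel G :=
  fun a b => [&& @adj G a b, a \in S & b \in S].

Definition connected_set (G : cgraph) (S : {set G}) : Prop :=
  forall a b, a \in S -> b \in S -> connect (induced_rel S) a b.

Definition two_connected_set (G : cgraph) (S : {set G}) : Prop :=
  2 < #|S| /\ forall x, x \in S -> connected_set (S :\ x).

Definition two_conn_component (G : cgraph) (S : {set G}) : Prop :=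
  two_connected_set S /\
  forall S' : {set G}, S \subset S' -> two_connected_set S' -> S' = S.

Definition same_2cc (G : cgraph) (u v : G) : Prop :=
  exists S : {set G}, [/\ two_conn_component S, u \in S & v \in S].

Definition upd (T : Type) k (x : 'I_k -> T) (i : 'I_k) (w : T) : 'I_k -> T :=
  fun j => if j == i then w else x j.

(* same initial color: input colors and ordered isomorphism type of the
   induced subgraph on the entries *)
Definition same_atp (G H : cgraph) k (x : 'I_k -> G) (y : 'I_k -> H) : Prop :=
  forall i j : 'I_k,
    [/\ (x i == x j) = (y i == y j),
        @adj G (x i) (x j) = @adj H (y i) (y j),
        @vcol G (x i) = @vcol H (y i) &
        @adj G (x i) (x j) -> @acol G (x i) (x j) = @acol H (y i) (y j)].

(* same_col G H k r x y : the canonical k-WL colors after r rounds of the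
   tuple x of G and the tuple y of H coincide.  Equality of the multisets
   { (chi(x[1/w]), ..., chi(x[k/w])) : w in V(G) } and the analogous one for H
   is written out as the existence of a bijection sigma : V(G) -> V(H)
   matching the entries. *)
Fixpoint same_col (G H : cgraph) k (r : nat) (x : 'I_k -> G) (y : 'I_k -> H)
  : Prop :=
  match r with
  | 0 => same_atp x y
  | r'.+1 =>
      same_col r' x y /\
      exists sigma : G -> H, bijective sigma /\
        forall (w : G) (i : 'I_k),
          same_col r' (upd x i w) (upd y i (sigma w))
  end.

Definition same_stable_col (G H : cgraph) k (x : 'I_k -> G) (y : 'I_k -> H)
  : Prop := forall r, same_col r x y.

Definition pair_tuple (T : Type) k (u v : T) : 'I_k -> T :=
  fun i => if nat_of_ord i == 0 then u else v.

(* Main.v *)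
Require Import Defs.
From mathcomp Require Import all_boot zify.
From Stdlib Require Import Classical FunctionalExtensionality.
Set Implicit Arguments. Unset Strict Implicit. Unset Printing Implicit Defensive.

Definition Col (G H : cgraph) m (x : 'I_m -> G) (y : 'I_m -> H) :=
  forall r, same_col r x y.

Lemma same_col_proj (G H : cgraph) m k (f : 'I_m -> 'I_k) : injective f ->
  forall r (x : 'I_k -> G) (y : 'I_k -> H),
  same_col r x y -> same_col r (x \o f) (y \o f).
Proof.
move=> injf; elim=> [|r IH] x y /=.
  by move=> h i j; exact: h (f i) (f j).
move=> [h0 [s [bs hs]]]; split; first exact: IH.
exists s; split=> // w i.
have -> : upd (x \o f) i w = (upd x (f i) w) \o f.
  by apply: functional_extensionality => j; rewrite /upd /= (inj_eq injf).
have -> : upd (y \o f) i (s w) = (upd y (f i) (s w)) \o f.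
  by apply: functional_extensionality => j; rewrite /upd /= (inj_eq injf).
exact: IH.
Qed.

Lemma Col_proj (G H : cgraph) m k (f : 'I_m -> 'I_k) (x : 'I_k -> G) (y : 'I_k -> H) :
  injective f -> Col x y -> Col (x \o f) (y \o f).
Proof. by move=> injf h r; apply: same_col_proj. Qed.

Lemma same_col_mono (G H : cgraph) m r R (x : 'I_m -> G) (y : 'I_m -> H) :
  r <= R -> same_col R x y -> same_col r x y.
Proof.
elim: R => [|R IH]; first by rewrite leqn0 => /eqP ->.
rewrite leq_eqVlt => /orP [/eqP -> // | ltrR] h.
by apply: IH => //; exact: h.1.
Qed.

Lemma Col_step (G H : cgraph) m (x : 'I_m -> G) (y : 'I_m -> H) :
  Col x y -> exists s : G -> H, bijective s /\
    forall w i, Col (upd x i w) (upd y i (s w)).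
Proof.
move=> hc; apply: NNPP => hn.
have key : forall s : {ffun G -> H}, exists r,
    ~ (bijective s /\ forall w i, same_col r (upd x i w) (upd y i (s w))).
  move=> s; apply: NNPP => h; apply: hn; exists s.
  have hb : bijective s.
    by apply: NNPP => nb; apply: h; exists 0; case.
  split=> // w i r; apply: NNPP => nr; apply: h; exists r.
  by case=> _ /(_ w i).
have [R hR] : exists R, forall s : {ffun G -> H},
    ~ (bijective s /\ forall w i, same_col R (upd x i w) (upd y i (s w))).
  suff: forall l : seq {ffun G -> H}, exists R, forall s, s \in l ->
      ~ (bijective s /\ forall w i, same_col R (upd x i w) (upd y i (s w))).
    move=> /(_ (enum {: {ffun G -> H}})) [R hR]; exists R => s.
    by apply: hR; rewrite mem_enum.
  elim=> [|s l [R hR]]; first by exists 0.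
  have [r hr] := key s.
  exists (maxn r R) => s'; rewrite inE => /orP [/eqP -> | hs'] [hb hall].
    apply: hr; split=> // w i; apply: same_col_mono (hall w i); exact: leq_maxl.
  apply: (hR s' hs'); split=> // w i; apply: same_col_mono (hall w i); exact: leq_maxr.
have [_ [s [hb hs]]] := hc R.+1.
apply: (hR [ffun z => s z]); split.
  by apply: (eq_bij hb) => z; rewrite ffunE.
by move=> w i; rewrite ffunE; exact: hs.
Qed.

Notation pt a b := (@pair_tuple _ 2 a b).
Definition i1 : 'I_2 := @Ordinal 2 1 isT.

Lemma upd_pt0 (T : Type) (a b w : T) : upd (pt a b) ord0 w = pt w b.
Proof.
apply: functional_extensionality => j; rewrite /upd /pair_tuple.
by case: j => [[|[|n]] Hn].
Qed.

Lemma upd_pt1 (T : Type) (a b w : T) : upd (pt a b) i1 w = pt a w.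
Proof.
apply: functional_extensionality => j; rewrite /upd /pair_tuple.
by case: j => [[|[|n]] Hn].
Qed.

Lemma Col_pair_step (G H : cgraph) (a b : G) (a' b' : H) :
  Col (pt a b) (pt a' b') -> exists s : G -> H, bijective s /\
    forall w, Col (pt w b) (pt (s w) b') /\ Col (pt a w) (pt a' (s w)).
Proof.
move=> /Col_step [s [bs hs]]; exists s; split=> // w; split.
  by have := hs w ord0; rewrite !upd_pt0.
by have := hs w i1; rewrite !upd_pt1.
Qed.

Lemma Col_atp (G H : cgraph) (a b : G) (a' b' : H) :
  Col (pt a b) (pt a' b') -> (a == b) = (a' == b') /\ adj a b = adj a' b'.
Proof. by move=> h; have [] := h 0 ord0 i1. Qed.

Definition swap2 (i : 'I_2) : 'I_2 := if nat_of_ord i == 0 then i1 else ord0.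

Lemma swap2_inj : injective swap2.
Proof.
by case=> [[|[|n]] Hn] [[|[|m]] Hm] //= _; apply: val_inj.
Qed.

Lemma Col_swap (G H : cgraph) (a b : G) (a' b' : H) :
  Col (pt a b) (pt a' b') -> Col (pt b a) (pt b' a').
Proof.
move=> h; have := Col_proj swap2_inj h.
have E : forall (T : Type) (x y : T), pt x y \o swap2 = pt y x.
  by move=> T x y; apply: functional_extensionality => j; case: j => [[|[|n]] Hn].
by rewrite !E.
Qed.

Lemma Col_k2 (G H : cgraph) k (hk : 2 <= k) (u v : G) (u' v' : H) :
  Col (@pair_tuple _ k u v) (@pair_tuple _ k u' v') -> Col (pt u v) (pt u' v').
Proof.
move=> h; have inj : injective (widen_ord hk).
  by move=> i j /(congr1 val) /= /val_inj.
exact: (Col_proj inj h).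
Qed.


Fixpoint W (G : cgraph) t (x y : G) : nat :=
  match t with 0 => (x == y) : nat | t.+1 => \sum_(z : G) adj x z * W t z y end.
Fixpoint Fp (G : cgraph) t (x c : G) : nat :=
  match t with 0 => (x == c) : nat | t.+1 => (x != c) * \sum_(z : G) adj x z * Fp t z c end.
Fixpoint Wc (G : cgraph) (c : G) t (x y : G) : nat :=
  match t with 0 => ((x == y) && (x != c)) : nat
  | t.+1 => (x != c) * \sum_(z : G) adj x z * Wc c t z y end.

Lemma W_col (G H : cgraph) t : forall (a b : G) (a' b' : H),
  Col (pt a b) (pt a' b') -> W t a b = W t a' b'.
Proof.
elim: t => [|t IH] a b a' b' h /=.
  by have [-> _] := Col_atp h.
have [s [bs hs]] := Col_pair_step h.
rewrite [RHS](reindex s) /=; last exact: onW_bij.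
apply: eq_bigr => z _; have [h1 h2] := hs z.
by rewrite (IH _ _ _ _ h1); have [_ ->] := Col_atp h2.
Qed.

Lemma Fp_col (G H : cgraph) t : forall (a c : G) (a' c' : H),
  Col (pt a c) (pt a' c') -> Fp t a c = Fp t a' c'.
Proof.
elim: t => [|t IH] a c a' c' h /=.
  by have [-> _] := Col_atp h.
have [s [bs hs]] := Col_pair_step h.
rewrite [in RHS](reindex s) /=; last exact: onW_bij.
have [-> _] := Col_atp h; congr (_ * _).
apply: eq_bigr => z _; have [h1 h2] := hs z.
by rewrite (IH _ _ _ _ h1); have [_ ->] := Col_atp h2.
Qed.

Lemma W_split (G : cgraph) (c : G) t : forall x y : G,
  W t x y = Wc c t x y + \sum_(s < t.+1) Fp s x c * W (t - s) c y.
Proof.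
elim: t => [|t IH] x y.
  rewrite big_ord1 /=; case: (eqVneq x c) => [->|hxc].
    by case: (c == y).
  by case: (x == y).
rewrite big_ord_recl (_ : t.+1 - ord0 = t.+1) //.
under eq_bigr => i _ do rewrite lift0 subSS.
case: (eqVneq x c) => [->|hxc].
  rewrite /= eqxx /= mul0n add0n mul1n -[LHS]addn0; congr (_ + _).
  by rewrite big1 // => i _; rewrite mul0n.
have T1 : forall n, true * n = n := mul1n.
rewrite /= hxc (negbTE hxc) mul0n add0n !T1.
under eq_bigr => z _ do rewrite IH mulnDr big_distrr.
rewrite big_split /=; congr (_ + _).
rewrite exchange_big /=; apply: eq_bigr => i _.
rewrite mul1n big_distrl /=; apply: eq_bigr => z _.
by rewrite mulnA.
Qed.

Lemma Wc_col (G H : cgraph) t (x y c : G) (x' y' c' : H) :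
  Col (pt x y) (pt x' y') -> Col (pt x c) (pt x' c') -> Col (pt c y) (pt c' y') ->
  Wc c t x y = Wc c' t x' y'.
Proof.
move=> hxy hxc hcy.
have E1 := W_split c t x y; have E2 := W_split c' t x' y'.
have ES : \sum_(s < t.+1) Fp s x c * W (t - s) c y =
          \sum_(s < t.+1) Fp s x' c' * W (t - s) c' y'.
  by apply: eq_bigr => s _; rewrite (Fp_col _ hxc) (W_col _ hcy).
by rewrite (W_col _ hxy) E2 ES in E1; move/addIn: E1.
Qed.

Definition conn (G : cgraph) (c x y : G) := connect (induced_rel (setT :\ c)) x y.

Lemma Wc_neq (G : cgraph) (c : G) t x y : 0 < Wc c t x y -> x != c.
Proof.
by case: t => [|t] /=; case: (x != c) => //; rewrite ?andbF ?mul0n.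
Qed.

Lemma Wc_conn (G : cgraph) (c : G) t : forall x y, 0 < Wc c t x y -> conn c x y.
Proof.
elim: t => [|t IH] x y /=.
  by case: eqP => // -> _; exact: connect0.
case: (eqVneq x c) => //= hxc; rewrite mul1n => hs.
have [z hz] : exists z, 0 < adj x z * Wc c t z y.
  apply: NNPP => hn; move: hs; rewrite big1 // => z _.
  by apply/eqP; rewrite -leqn0 leqNgt; apply/negP => hz; apply: hn; exists z.
rewrite muln_gt0 in hz; case/andP: hz => hxz hw.
apply: connect_trans (IH _ _ hw); apply: connect1.
rewrite /induced_rel !in_setD1 !in_setT hxc (Wc_neq hw).
by move: hxz; case: (adj x z).
Qed.

Lemma conn_Wc (G : cgraph) (c x y : G) : x != c -> conn c x y -> exists t, 0 < Wc c t x y.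
Proof.
move=> hxc /connectP [p hp ->]; elim: p x hxc hp => [|z p IH] x hxc /=.
  by move=> _; exists 0; rewrite /= eqxx hxc.
case/andP => /and3P [hxz _ hz] hp.
rewrite in_setD1 in_setT andbT in hz.
have [t ht] := IH z hz hp; exists t.+1 => /=.
rewrite hxc mul1n (bigD1 z) //= hxz mul1n.
by apply: leq_trans ht (leq_addr _ _).
Qed.

Lemma conn_col (G H : cgraph) (x y c : G) (x' y' c' : H) :
  Col (pt x y) (pt x' y') -> Col (pt x c) (pt x' c') -> Col (pt c y) (pt c' y') ->
  x != c -> conn c x y -> conn c' x' y'.
Proof.
move=> hxy hxc hcy nxc /(conn_Wc nxc) [t ht].
by apply: (@Wc_conn _ c' t); rewrite -(Wc_col t hxy hxc hcy).
Qed.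


Lemma induced_sym (G : cgraph) (A : {set G}) : symmetric (induced_rel A).
Proof. by move=> x y; rewrite /induced_rel adj_sym; case: (adj y x); case: (x \in A); case: (y \in A). Qed.

Lemma connect_induced_sym (G : cgraph) (A : {set G}) x y :
  connect (induced_rel A) x y = connect (induced_rel A) y x.
Proof. exact: (sym_connect_sym (@induced_sym G A)). Qed.

Lemma conn_sub (G : cgraph) (A B : {set G}) x y : A \subset B ->
  connect (induced_rel A) x y -> connect (induced_rel B) x y.
Proof.
move=> sAB; apply: connect_sub => p q /and3P [hpq hp hq]; apply: connect1.
by rewrite /induced_rel hpq (subsetP sAB _ hp) (subsetP sAB _ hq).
Qed.

Lemma path_induced (G : cgraph) (A : {set G}) x p :
  x \in A -> path (induced_rel A) x p -> path (@adj G) x p && all (mem A) (x :: p).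
Proof.
elim: p x => [|y p IH] x hx /=; first by rewrite hx.
case/andP => /and3P [hxy _ hy] hp.
by have /andP [-> /= /andP [-> ->]] := IH y hy hp; rewrite hxy hx.
Qed.

Lemma path_conn (G : cgraph) (A : {set G}) x p :
  path (@adj G) x p -> all (mem A) (x :: p) -> connect (induced_rel A) x (last x p).
Proof.
elim: p x => [|y p IH] x /=; first by move=> _ _; exact: connect0.
case/andP=> hxy hp /and3P [hx hy hall].
apply: connect_trans (IH y hp _); last by rewrite /= hy.
by apply: connect1; rewrite /induced_rel hxy hx.
Qed.

Lemma conn_path (G : cgraph) (A : {set G}) x y : x \in A ->
  connect (induced_rel A) x y -> exists p,
    [/\ path (@adj G) x p, all (mem A) (x :: p), uniq (x :: p) & y = last x p].
Proof.
move=> hx /connectP [p hp ->]; case: (shortenP hp) => p' hp' hu _.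
exists p'; have /andP [h1 h2] := path_induced hx hp'; by split.
Qed.

Lemma connect_mem (G : cgraph) (A : {set G}) x y : x \in A ->
  connect (induced_rel A) x y -> y \in A.
Proof.
move=> hx /(conn_path hx) [p [_ hall _ ->]].
by apply: (allP hall); exact: mem_last.
Qed.

Lemma conn_neq (G : cgraph) (c x y : G) : x != c -> conn c x y -> y != c.
Proof.
move=> hx h; have := connect_mem _ h; rewrite !in_setD1 !in_setT !andbT.
by apply.
Qed.

Lemma conn_edge (G : cgraph) (c x y : G) : adj x y -> x != c -> y != c -> conn c x y.
Proof. by move=> hxy hx hy; apply: connect1; rewrite /induced_rel !in_setD1 !in_setT hxy hx hy. Qed.

Lemma tc_third (G : cgraph) (S : {set G}) a b : two_connected_set S ->
  exists x, [/\ x \in S, x != a & x != b].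
Proof.
move=> [hc _].
have : 0 < #|S :\ a :\ b|.
  move: hc; rewrite (cardsD1 a S) (cardsD1 b (S :\ a)).
  by case: (a \in S); case: (b \in S :\ a) => /=; lia.
rewrite card_gt0 => /set0Pn [x]; rewrite !in_setD1 => /and3P [hb ha hS].
by exists x.
Qed.

Lemma tc_conn (G : cgraph) (S : {set G}) a b c : two_connected_set S ->
  a \in S -> b \in S -> a != c -> b != c -> conn c a b.
Proof.
move=> hS ha hb hac hbc.
have sub : forall y, y \in S -> (y == c) || (c \notin S) -> S :\ y \subset setT :\ c.
  move=> y hy hyc; apply/subsetP => z; rewrite !in_setD1 in_setT andbT => /andP [hzy hz].
  case/orP: hyc => [/eqP <- // | hc].
  by apply/eqP => E; move: hc; rewrite -E hz.
case: (boolP (c \in S)) => hc.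
  apply: conn_sub (sub c hc _) _; first by rewrite eqxx.
  by apply: hS.2 => //; rewrite in_setD1 ?ha ?hb ?hac ?hbc.
have [x [hx hxa hxb]] := tc_third a b hS.
apply: conn_sub (sub x hx _) _; first by rewrite hc orbT.
by apply: hS.2 => //; rewrite in_setD1 ?ha ?hb ?(eq_sym a) ?(eq_sym b) ?hxa ?hxb.
Qed.

Lemma tc_nbr (G : cgraph) (S : {set G}) a b : two_connected_set S ->
  a \in S -> b \in S -> a != b ->
  exists x, [/\ adj a x, x != b & conn a b x].
Proof.
move=> hS ha hb hab.
have [z [hz hza hzb]] := tc_third a b hS.
have haS : a \in S :\ b by rewrite in_setD1 hab ha.
have hzS : z \in S :\ b by rewrite in_setD1 hzb hz.
have := hS.2 b hb a z haS hzS.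
case/connectP => [[|x p]] /=; first by move=> _ E; move: hza; rewrite E eqxx.
case/andP => /and3P [hax _ hx] _ _.
have hxa : x != a by apply/eqP => E; move: hax; rewrite E adj_irr.
rewrite in_setD1 in hx; case/andP: hx => hxb hxS.
exists x; split => //.
apply: conn_sub (_ : S :\ a \subset _) _.
  by apply/subsetP => y; rewrite !in_setD1 in_setT andbT; case/andP.
by apply: hS.2 => //; rewrite in_setD1 ?hxS ?hb ?hxa // eq_sym hab.
Qed.


Definition Tset (H : cgraph) (a b : H) : {set H} :=
  [set z | [forall c, (c != z) ==> (conn c z a || conn c z b)]].

Lemma TsetP (H : cgraph) (a b z : H) :
  reflect (forall c, c != z -> conn c z a \/ conn c z b) (z \in Tset a b).
Proof.
rewrite inE; apply: (iffP forallP) => h c.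
  by move=> hc; have := h c; rewrite hc /= => /orP.
by apply/implyP => hc; apply/orP; apply: h.
Qed.

Lemma Tpath (H : cgraph) (a b : H) p : forall z, z \in Tset a b ->
  path (@adj H) z p -> uniq (z :: p) -> (last z p == a) || (last z p == b) ->
  all (mem (Tset a b)) p.
Proof.
elim: p => [|y p IH] z hz //= /andP [hzy hp] /andP [hzn hu] hl.
have hyT : y \in Tset a b.
  apply/TsetP => c hcy.
  case: (boolP (c \in p)) => hcp.
    have hcz : c != z.
      by apply/eqP => E; move: hzn; rewrite -E inE hcp orbT.
    have hyz : conn c y z.
      by apply: conn_edge; [rewrite adj_sym | rewrite eq_sym | rewrite eq_sym].
    have [h|h] := TsetP _ _ _ hz c hcz.
      by left; apply: connect_trans hyz h.
    by right; apply: connect_trans hyz h.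
  have hc : conn c y (last y p).
    apply: path_conn => //=; apply/andP; split; first by rewrite !inE eq_sym hcy.
    by apply/allP => w hw; rewrite !inE andbT; apply/eqP => E; move: hcp; rewrite -E hw.
  by case/orP: hl => /eqP E; rewrite E in hc; [left | right].
by rewrite hyT /=; apply: IH hyT hp hu hl.
Qed.

Lemma reachT (H : cgraph) (a b y z p : H) : z \in Tset a b -> z != y ->
  (p == a) || (p == b) -> conn y z p -> connect (induced_rel (Tset a b :\ y)) z p.
Proof.
move=> hz hzy hp hc.
have hzA : z \in setT :\ y by rewrite in_setD1 in_setT hzy.
have [q [hq hall hu E]] := conn_path hzA hc.
have hl : (last z q == a) || (last z q == b) by rewrite -E.
have hallT := Tpath hz hq hu hl.
rewrite E; apply: path_conn => //.
apply/allP => w hw /=.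
have hwy : w != y by have := allP hall w hw; rewrite /= !inE andbT.
rewrite in_setD1 hwy /=.
move: hw; rewrite in_cons => /orP [/eqP -> // | hw'].
exact: allP hallT w hw'.
Qed.

Lemma H_thm (H : cgraph) (a b x : H) : a != b ->
  (forall c, c != a -> c != b -> conn c a b) ->
  adj a x -> x != b -> conn a b x ->
  exists T : {set H}, [/\ two_connected_set T, a \in T & b \in T].
Proof.
move=> hab hsep hax hxb hbx.
have hxa : x != a by apply/eqP => E; move: hax; rewrite E adj_irr.
have haT : a \in Tset a b by apply/TsetP => c hc; left; exact: connect0.
have hbT : b \in Tset a b by apply/TsetP => c hc; right; exact: connect0.
have hxT : x \in Tset a b.
  apply/TsetP => c hcx; case: (eqVneq c a) => [-> | hca].
    by right; rewrite /conn connect_induced_sym.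
  by left; apply: conn_edge; [rewrite adj_sym | rewrite eq_sym | rewrite eq_sym].
exists (Tset a b); split => //; split.
  have : [set a; b; x] \subset Tset a b.
    apply/subsetP => w hw; have : (w == a) || (w == b) || (w == x) by move: hw; rewrite !inE.
    by move=> /orP [/orP [/eqP -> | /eqP ->] | /eqP ->].
  move/subset_leq_card => hle; apply: leq_trans hle.
  have -> : [set a; b; x] = x |: [set a; b] by apply/setP => w; rewrite !inE orbC.
  by rewrite cardsU1 cards2 !inE negb_or hab hxa hxb.
move=> y hy z1 z2 hz1 hz2.
have key : forall z, z \in Tset a b :\ y -> exists p,
    [/\ (p == a) || (p == b), p != y & connect (induced_rel (Tset a b :\ y)) z p].
  move=> z; rewrite in_setD1 => /andP [hzy hz].
  have hyz : y != z by rewrite eq_sym.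
  have [h|h] := TsetP _ _ _ hz y hyz.
    exists a; split; [by rewrite eqxx | exact: conn_neq hzy h | ].
    by apply: reachT hz hzy _ h; rewrite eqxx.
  exists b; split; [by rewrite eqxx orbT | exact: conn_neq hzy h | ].
  by apply: reachT hz hzy _ h; rewrite eqxx orbT.
have [p1 [hp1 hp1y c1]] := key _ hz1.
have [p2 [hp2 hp2y c2]] := key _ hz2.
have cab : a != y -> b != y -> connect (induced_rel (Tset a b :\ y)) a b.
  move=> hay hby.
  have hya : y != a by rewrite eq_sym.
  have hyb : y != b by rewrite eq_sym.
  by apply: reachT haT hay _ (hsep y hya hyb); rewrite eqxx orbT.
have c12 : connect (induced_rel (Tset a b :\ y)) p1 p2.
  case/orP: hp1 => /eqP E1; case/orP: hp2 => /eqP E2; subst p1 p2;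
    rewrite ?connect0 //.
    exact: cab.
  by rewrite connect_induced_sym; apply: cab.
apply: connect_trans c1 (connect_trans c12 _).
by rewrite connect_induced_sym.
Qed.


Lemma ext_max_n (H : cgraph) n : forall S : {set H}, #|~: S| < n ->
  two_connected_set S -> exists S0, two_conn_component S0 /\ S \subset S0.
Proof.
elim: n => [|n IH] S //= hn hS.
case: (classic (two_conn_component S)) => hm.
  by exists S; split.
have [S' hS'] : exists S' : {set H}, ~ (S \subset S' -> two_connected_set S' -> S' = S).
  apply: NNPP => hne; apply: hm; split => // S'.
  by apply: NNPP => h; apply: hne; exists S'.
have hsub : S \subset S' by apply: NNPP => h; apply: hS' => /h.
have htc : two_connected_set S' by apply: NNPP => h; apply: hS' => _ /h.
have hne : S' != S by apply/eqP => E; apply: hS' => _ _.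
have hpr : S \proper S' by rewrite properEneq eq_sym hne hsub.
have hlt : #|~: S'| < #|~: S| by apply: proper_card; rewrite properC.
have [S0 [h0 h1]] := IH S' (leq_trans hlt hn) htc.
by exists S0; split => //; apply: subset_trans hsub h1.
Qed.

Lemma ext_max (H : cgraph) (T : {set H}) :
  two_connected_set T -> exists S0, two_conn_component S0 /\ T \subset S0.
Proof. exact: (@ext_max_n H (#|~: T|).+1 T (ltnSn _)). Qed.

Lemma main_pair (G H : cgraph) (S : {set G}) (a b : G) (a' b' : H) :
  two_connected_set S -> a \in S -> b \in S -> a != b ->
  Col (pt a b) (pt a' b') ->
  exists T : {set H}, [/\ two_connected_set T, a' \in T & b' \in T].
Proof.
move=> hS ha hb hab hc.
have [s [[g sg gs] hs]] := Col_pair_step hc.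
have hab' : a' != b' by have [<- _] := Col_atp hc.
have hsep : forall c', c' != a' -> c' != b' -> conn c' a' b'.
  move=> c' hca hcb; have [h1 h2] := hs (g c'); rewrite gs in h1 h2.
  have hac : a != g c' by have [-> _] := Col_atp h2; rewrite eq_sym.
  have hcb' : g c' != b by have [-> _] := Col_atp h1.
  apply: (conn_col hc h2 h1 hac).
  by apply: tc_conn hS ha hb hac _; rewrite eq_sym.
have [x [hax hxb hbx]] := tc_nbr hS ha hb hab.
have [h1 h2] := hs x.
have hax' : adj a' (s x) by have [_ <-] := Col_atp h2.
have hxb' : s x != b' by have [<- _] := Col_atp h1.
have hbx' : conn a' b' (s x).
  apply: (conn_col (Col_swap h1) (Col_swap hc) h2); first by rewrite eq_sym.
  exact: hbx.
exact: H_thm hab' hsep hax' hxb' hbx'.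
Qed.

Theorem theorem6 (k : nat) (G H : cgraph) (u v : G) (u' v' : H) :
  2 <= k ->
  same_2cc u v ->
  ~ same_2cc u' v' ->
  ~ same_stable_col (@pair_tuple _ k u v) (@pair_tuple _ k u' v').
Proof.
move=> hk [S [[hS _] hu hv]] hn hcol.
have hc : Col (pt u v) (pt u' v') by apply: (Col_k2 hk); exact: hcol.
have [T [hT hu' hv']] : exists T : {set H}, [/\ two_connected_set T, u' \in T & v' \in T].
  case: (eqVneq u v) => [E | huv]; last exact: main_pair hS hu hv huv hc.
  subst v.
  have E' : u' = v' by have [/esym /eqP] := Col_atp hc; rewrite eqxx.
  subst v'.
  have [w [hw hwu _]] := tc_third u u hS.
  have [s [_ hs]] := Col_pair_step hc.
  have [_ h2] := hs w.
  have huw : u != w by rewrite eq_sym.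
  have [T [hT h1 _]] := main_pair hS hu hw huw h2.
  by exists T; split.
have [S0 [h0 hsub]] := ext_max hT.
by apply: hn; exists S0; split => //; apply: (subsetP hsub).
Qed.
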